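(* Fix orthogonal projections $P_A,P_B$ on a Hilbert space $H$ and let $K=\ker P_A\cap\ker P_B$. For each positive $R\in B(H)$ let $R_\infty(R)$ denote the strong limit of the alternating weighted residual sequence started at $R_0=R$. Then $\{R_\infty(R): R\in B(H),\ R\ge0\}$ equals the set of all positive operators $T\in B(H)$ with $\operatorname{ran}(T)\subset K$.
   Context: For an orthogonal projection $P$ and positive $R\in B(H)$, $\Phi_P(R):=R^{1/2}(I-P)R^{1/2}$. The alternating weighted residual sequence started at $R_0\ge0$ is $R_{n+1}=\Phi_{P_B}(R_n)$ for $n$ even and $R_{n+1}=\Phi_{P_A}(R_n)$ for $n$ odd; it is decreasing in the Loewner order and converges strongly to a positive operator, called its limit. *)

(* Defs.v *)
From HB Require Import structures.
From mathcomp Require Import all_boot all_order all_algebra.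
From mathcomp Require Import complex.
From mathcomp Require Import reals.
From Stdlib Require Import ClassicalEpsilon.
Set Implicit Arguments. Unset Strict Implicit. Unset Printing Implicit Defensive.
Import Order.TTheory GRing.Theory Num.Theory.
Local Open Scope ring_scope.

Section Hilbert.
Variables (R : realType) (H : lmodType R[i]) (ip : H -> H -> R[i]).

Definition normsq (x : H) : R := complex.Re (ip x x).

Definition cvg_to (u : nat -> H) (l : H) : Prop :=
  forall e : R, 0 < e -> exists N : nat, forall n, (N <= n)%N -> normsq (u n - l) < e.

Definition cauchy_seq (u : nat -> H) : Prop :=
  forall e : R, 0 < e -> exists N : nat, forall n m, (N <= n)%N -> (N <= m)%N ->
    normsq (u n - u m) < e.

Definition is_hilbert : Prop :=
  [/\ (forall (a : R[i]) x y z, ip (a *: x + y) z = a * ip x z + ip y z),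
      (forall x y, ip y x = Num.conj (ip x y)),
      (forall x, 0 <= ip x x),
      (forall x, ip x x = 0 -> x = 0)
    & (forall u, cauchy_seq u -> exists l, cvg_to u l)].

Definition bounded_op (T : H -> H) : Prop :=
  (forall (a : R[i]) x y, T (a *: x + y) = a *: T x + T y) /\
  exists M : R, forall x, normsq (T x) <= M * normsq x.

(* positive operators: <T x, x> >= 0 (in the order of C, i.e. real and >= 0) *)
Definition positive_op (T : H -> H) : Prop :=
  bounded_op T /\ forall x, 0 <= ip (T x) x.

Definition orth_proj (P : H -> H) : Prop :=
  [/\ bounded_op P, (forall x, P (P x) = P x) & (forall x y, ip (P x) y = ip x (P y))].

Definition op_sqrt (T : H -> H) : H -> H :=
  epsilon (inhabits (fun x : H => x))
    (fun S => positive_op S /\ forall x, S (S x) = T x).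

Definition Phi (P T : H -> H) : H -> H :=
  fun x => op_sqrt T (op_sqrt T x - P (op_sqrt T x)).

Fixpoint residual (PA PB R0 : H -> H) (n : nat) : H -> H :=
  match n with
  | 0 => R0
  | k.+1 => Phi (if odd k then PA else PB) (residual PA PB R0 k)
  end.

Definition strong_limit (Rn : nat -> H -> H) (T : H -> H) : Prop :=
  forall x, cvg_to (fun n => Rn n x) (T x).

End Hilbert.

(* Main.v *)
Require Import Defs.
From HB Require Import structures.
From mathcomp Require Import all_boot all_order all_algebra.
From mathcomp Require Import complex.
From mathcomp Require Import reals.
From mathcomp Require Import ring lra.
From Stdlib Require Import ClassicalEpsilon FunctionalExtensionality.
Import Order.TTheory GRing.Theory Num.Theory.
Local Open Scope ring_scope.
Local Open Scope complex_scope.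
Set Implicit Arguments.
Notation Re := (@complex.Re _).
Notation Im := (@complex.Im _). Unset Strict Implicit. Unset Printing Implicit Defensive.

Section ComplexFacts.
Variable R : realType.
Implicit Types (z w : R[i]) (r s : R).
Lemma ReD z w : Re (z + w) = Re z + Re w. Proof. by case: z; case: w. Qed.
Lemma ImD z w : Im (z + w) = Im z + Im w. Proof. by case: z; case: w. Qed.
Lemma ReN z : Re (- z) = - Re z. Proof. by case: z. Qed.
Lemma ImN z : Im (- z) = - Im z. Proof. by case: z. Qed.
Lemma ReB z w : Re (z - w) = Re z - Re w. Proof. by rewrite ReD ReN. Qed.
Lemma ImB z w : Im (z - w) = Im z - Im w. Proof. by rewrite ImD ImN. Qed.
Lemma ReRM r z : Re ((r +i* 0) * z) = r * Re z.
Proof. by case: z => a b /=; rewrite mul0r subr0. Qed.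
Lemma ImRM r z : Im ((r +i* 0) * z) = r * Im z.
Proof. by case: z => a b /=; rewrite mul0r addr0. Qed.
Lemma ReJ z : Re ((Num.conj z)) = Re z. Proof. by case: z. Qed.
Lemma ImJ z : Im ((Num.conj z)) = - Im z. Proof. by case: z. Qed.
Lemma ReC r : Re ((r +i* 0)) = r. Proof. by []. Qed.
Lemma ImC r : Im ((r +i* 0)) = 0. Proof. by []. Qed.
Lemma Re0 : Re (0 : R[i]) = 0. Proof. by []. Qed.
Lemma ReMi z : Re ('i * z) = - Im z.
Proof. by case: z => a b /=; rewrite !mul0r !mul1r sub0r. Qed.
Lemma ReMNi z : Re ((- 'i) * z) = Im z.
Proof. by case: z => a b /=; rewrite oppr0 mul0r mulN1r opprK add0r. Qed.
Lemma ge0_real z : 0 <= z -> z = (Re z +i* 0) /\ 0 <= Re z.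
Proof. case: z => a b; rewrite lecE /= => /andP [/eqP -> ->]; by split. Qed.
Lemma real_Re z : Im z = 0 -> z = (Re z +i* 0).
Proof. by case: z => a b /= ->. Qed.
Lemma conj_real_eq z : (Num.conj z) = z -> Im z = 0.
Proof. case: z => a b /= [] /eqP; rewrite -subr_eq0 -opprD oppr_eq0 -mulr2n mulrn_eq0 /= => /eqP. by []. Qed.
Lemma ge0_C r : (0 <= (r +i* 0)) = (0 <= r). Proof. by rewrite lecE /= eqxx. Qed.
Lemma eqC r s : ((r +i* 0) = (s +i* 0)) -> r = s. Proof. by case. Qed.
Lemma Cadd r s : ((r + s) +i* 0) = (r +i* 0) + (s +i* 0).
Proof. rewrite /=. apply/eqP; rewrite eq_complex /= addr0 !eqxx. by []. Qed.
Lemma conjD z w : (Num.conj (z + w)) = (Num.conj z) + (Num.conj w).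
Proof. case: z => a b; case: w => c d; rewrite /= /conjc /=; congr (_ +i* _); ring. Qed.
Lemma conjN z : (Num.conj (- z)) = - (Num.conj z).
Proof. by case: z => a b. Qed.
Lemma conjM z w : (Num.conj (z * w)) = (Num.conj z) * (Num.conj w).
Proof. case: z => a b; case: w => c d; rewrite /= /conjc /=; congr (_ +i* _); ring. Qed.
Lemma conj0c : Num.conj (0 : R[i]) = 0.
Proof. rewrite /= /conjc /=; congr (_ +i* _); ring. Qed.
Lemma conjR r : Num.conj ((r +i* 0)) = (r +i* 0).
Proof. rewrite /= /conjc /=; congr (_ +i* _); ring. Qed.
End ComplexFacts.
Lemma quad_disc (R : realType) (a b c : R) :
  0 <= a -> 0 <= c -> (forall t, 0 <= a + 2 * t * b + t ^+ 2 * c) -> b ^+ 2 <= a * c.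
Proof.
move=> ha hc h.
have [c0|cpos] := eqVneq c 0.
  have [b0|bn0] := eqVneq b 0; first by rewrite b0 c0; nra.
  have := h (- (a + 1) / (2 * b)); rewrite c0 mulr0 addr0.
  have -> : 2 * (- (a + 1) / (2 * b)) * b = - (a + 1).
    field. by rewrite bn0.
  lra.
have cp : 0 < c by rewrite lt_def cpos.
have := h (- b / c).
have e : (- b / c) * c = - b by field.
nra.
Qed.

Section Form.
Variables (R : realType) (H : lmodType R[i]) (f : H -> H -> R[i]).
Hypotheses (flin : forall a x y z, f (a *: x + y) z = a * f x z + f y z)
  (fsym : forall x y, f y x = (Num.conj (f x y))) (fpos : forall x, 0 <= f x x).

Lemma f0l z : f 0 z = 0.
Proof.
have e := flin 1 0 0 z; rewrite scaler0 addr0 mul1r in e.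
by apply/(addrI (f 0 z)); rewrite addr0 -e.
Qed.
Lemma fDl x y z : f (x + y) z = f x z + f y z.
Proof. by rewrite -(scale1r x) flin mul1r scale1r. Qed.
Lemma fZl a x z : f (a *: x) z = a * f x z.
Proof. by rewrite -(addr0 (a *: x)) flin f0l addr0. Qed.
Lemma fNl x z : f (- x) z = - f x z.
Proof. by rewrite -scaleN1r fZl mulN1r. Qed.
Lemma fBl x y z : f (x - y) z = f x z - f y z.
Proof. by rewrite fDl fNl. Qed.
Lemma f0r z : f z 0 = 0.
Proof. by rewrite fsym f0l conj0c. Qed.
Lemma fDr x y z : f z (x + y) = f z x + f z y.
Proof. by rewrite fsym fDl conjD -!fsym. Qed.
Lemma fZr a x z : f z (a *: x) = (Num.conj a) * f z x.
Proof. by rewrite fsym fZl conjM -!fsym. Qed.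
Lemma fNr x z : f z (- x) = - f z x.
Proof. by rewrite fsym fNl conjN -fsym. Qed.
Lemma fBr x y z : f z (x - y) = f z x - f z y.
Proof. by rewrite fDr fNr. Qed.
Lemma f_diag x : f x x = (Re (f x x) +i* 0).
Proof. by case: (ge0_real (fpos x)). Qed.
Lemma f_diag_ge0 x : 0 <= Re (f x x).
Proof. by case: (ge0_real (fpos x)). Qed.
Lemma Re_f_sym x y : Re (f y x) = Re (f x y).
Proof. by rewrite fsym ReJ. Qed.

Lemma ReZl_real (t : R) x y : Re (f ((t +i* 0) *: x) y) = t * Re (f x y).
Proof. by rewrite fZl; exact: (@ReRM R t (f x y)). Qed.
Lemma ReZr_real (t : R) x y : Re (f x ((t +i* 0) *: y)) = t * Re (f x y).
Proof. by rewrite fZr conjR; exact: (@ReRM R t (f x y)). Qed.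

Lemma f_expand (t : R) x y : Re (f (x + (t +i* 0) *: y) (x + (t +i* 0) *: y)) =
  Re (f x x) + 2 * t * Re (f x y) + t ^+ 2 * Re (f y y).
Proof.
rewrite fDl !fDr !ReD !ReZl_real !ReZr_real Re_f_sym; lra.
Qed.

Lemma f_CS x y : Re (f x y) ^+ 2 <= Re (f x x) * Re (f y y).
Proof.
apply: quad_disc; rewrite ?f_diag_ge0 // => t.
rewrite -f_expand; exact: f_diag_ge0.
Qed.
End Form.

Lemma sq_le_abs (R : realType) (r p : R) : 0 <= p -> r ^+ 2 <= p ^+ 2 -> r <= p.
Proof.
move=> hp h; case: (lerP r p) => // hr; exfalso.
have : p * p < r * r by apply: ltr_pM.
by rewrite -!expr2 ltNge h.
Qed.

Section Hilb.
Variables (R : realType) (H : lmodType R[i]) (ip : H -> H -> R[i]).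
Hypothesis hH : is_hilbert ip.

Lemma ip_lin a x y z : ip (a *: x + y) z = a * ip x z + ip y z.
Proof. by case: hH. Qed.
Lemma ip_sym x y : ip y x = Num.conj (ip x y).
Proof. by case: hH. Qed.
Lemma ip_pos x : 0 <= ip x x.
Proof. by case: hH. Qed.
Lemma ip_def x : ip x x = 0 -> x = 0.
Proof. by case: hH => _ _ _ h _; apply: h. Qed.
Lemma ip_complete u : cauchy_seq ip u -> exists l, cvg_to ip u l.
Proof. by case: hH => _ _ _ _ h; apply: h. Qed.

Definition ipDl := fDl ip_lin.
Definition ipZl := fZl ip_lin.
Definition ipNl := fNl ip_lin.
Definition ipBl := fBl ip_lin.
Definition ip0l := f0l ip_lin.
Definition ipDr := fDr ip_lin ip_sym.
Definition ipZr := fZr ip_lin ip_sym.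
Definition ipNr := fNr ip_lin ip_sym.
Definition ipBr := fBr ip_lin ip_sym.
Definition ip0r := f0r ip_lin ip_sym.
Definition ReZl := ReZl_real ip_lin.
Definition ReZr := ReZr_real ip_lin ip_sym.
Definition Re_ip_sym := Re_f_sym ip_sym.

Local Notation nq := (normsq ip).

Lemma nq_ge0 x : 0 <= nq x. Proof. exact: (f_diag_ge0 ip_pos). Qed.
Lemma ip_nq x : ip x x = (nq x +i* 0). Proof. exact: (f_diag ip_pos). Qed.
Lemma nq_eq0 x : nq x = 0 -> x = 0.
Proof. by move=> h; apply: ip_def; rewrite ip_nq h. Qed.
Lemma nq0 : nq 0 = 0. Proof. by rewrite /normsq ip0l. Qed.
Lemma CS x y : Re (ip x y) ^+ 2 <= nq x * nq y.
Proof. exact: (f_CS ip_lin ip_sym ip_pos). Qed.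

Lemma nqD x y : nq (x + y) = nq x + nq y + 2 * Re (ip x y).
Proof. rewrite /normsq ipDl !ipDr !ReD (Re_ip_sym y x); lra. Qed.
Lemma nqN x : nq (- x) = nq x.
Proof. by rewrite /normsq ipNl ipNr ReN ReN opprK. Qed.
Lemma nqB x y : nq (x - y) = nq x + nq y - 2 * Re (ip x y).
Proof. by rewrite nqD nqN ipNr ReN; lra. Qed.
Lemma nqZ (t : R) x : nq ((t +i* 0) *: x) = t ^+ 2 * nq x.
Proof. by rewrite /normsq ReZl ReZr; lra. Qed.

Definition nrm x := Num.sqrt (nq x).
Lemma nrm_ge0 x : 0 <= nrm x. Proof. exact: sqrtr_ge0. Qed.
Lemma nrm_sq x : nrm x ^+ 2 = nq x. Proof. by rewrite sqr_sqrtr // nq_ge0. Qed.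
Lemma nrm0 : nrm 0 = 0. Proof. by rewrite /nrm nq0 sqrtr0. Qed.
Lemma nrm_eq0 x : nrm x = 0 -> x = 0.
Proof. by move=> h; apply: nq_eq0; rewrite -nrm_sq h expr0n. Qed.
Lemma nrm_le_sq x (a : R) : 0 <= a -> nq x <= a ^+ 2 -> nrm x <= a.
Proof. by move=> ha h; rewrite /nrm -[a](ger0_norm ha) -sqrtr_sqr ler_sqrt // sqr_ge0. Qed.
Lemma nrm_lt_sq x (a : R) : 0 < a -> nq x < a ^+ 2 -> nrm x < a.
Proof. by move=> ha h; rewrite /nrm -[a](ger0_norm (ltW ha)) -sqrtr_sqr ltr_sqrt // exprn_gt0. Qed.
Lemma CSabs x y : `|Re (ip x y)| <= nrm x * nrm y.
Proof.
have h := CS x y; rewrite -!nrm_sq -exprMn -real_normK ?num_real // in h.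
by apply: sq_le_abs => //; rewrite mulr_ge0 ?nrm_ge0.
Qed.
Lemma CSn x y : Re (ip x y) <= nrm x * nrm y.
Proof. exact: le_trans (ler_norm _) (CSabs x y). Qed.
Lemma nrmD x y : nrm (x + y) <= nrm x + nrm y.
Proof.
apply: nrm_le_sq; first by rewrite addr_ge0 ?nrm_ge0.
rewrite nqD -!nrm_sq; have := CSn x y; nra.
Qed.
Lemma nrmN x : nrm (- x) = nrm x. Proof. by rewrite /nrm nqN. Qed.
Lemma nrmB x y : nrm (x - y) <= nrm x + nrm y.
Proof. by rewrite -(nrmN y) nrmD. Qed.
Lemma nrmBC x y : nrm (x - y) = nrm (y - x).
Proof. by rewrite -nrmN opprB. Qed.
Lemma nrmZ (t : R) x : nrm ((t +i* 0) *: x) = `|t| * nrm x.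
Proof. by rewrite /nrm nqZ sqrtrM ?sqrtr_sqr // sqr_ge0. Qed.


Lemma nqZc a x : nq (a *: x) = Re (a * Num.conj a) * nq x.
Proof.
rewrite /normsq ipZl ipZr ip_nq; case: a => a b /=.
ring.
Qed.
Definition cabs (a : R[i]) := Num.sqrt (Re (a * Num.conj a)).
Lemma cabs_ge0 a : 0 <= cabs a. Proof. exact: sqrtr_ge0. Qed.
Lemma nrmZc a x : nrm (a *: x) = cabs a * nrm x.
Proof.
rewrite /nrm nqZc sqrtrM //; case: a => a b /=; nra.
Qed.
Lemma Im_ip x y : Im (ip x y) = Re (ip x ('i *: y)).
Proof. rewrite ipZr; case: (ip x y) => a b /=; ring. Qed.
Lemma nrm_i x : nrm ('i *: x) = nrm x.
Proof.
rewrite nrmZc; suff -> : cabs 'i = 1 by rewrite mul1r.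
rewrite /cabs -[X in _ = X]sqrtr1; congr Num.sqrt; rewrite /=; ring.
Qed.
Lemma CSIm x y : `|Im (ip x y)| <= nrm x * nrm y.
Proof. by rewrite Im_ip -(nrm_i y) CSabs. Qed.

Definition cv (u : nat -> H) l := forall e : R, 0 < e -> exists N, forall n, (N <= n)%N -> nrm (u n - l) < e.
Definition rcv (u : nat -> R) l := forall e : R, 0 < e -> exists N, forall n, (N <= n)%N -> `|u n - l| < e.

Lemma cv_cvg_to u l : cv u l -> cvg_to ip u l.
Proof.
move=> h e he; have he' : 0 < Num.sqrt e by rewrite sqrtr_gt0.
have [N hN] := h _ he'; exists N => n /hN hn.
rewrite -nrm_sq; have := sqr_sqrtr (ltW he); have := nrm_ge0 (u n - l).
have := sqrtr_ge0 e; nra.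
Qed.
Lemma cvg_to_cv u l : cvg_to ip u l -> cv u l.
Proof.
move=> h e he; have he' : 0 < e ^+ 2 by rewrite exprn_gt0.
have [N hN] := h _ he'; exists N => n /hN hn.
by apply: nrm_lt_sq.
Qed.

Lemma cv_unique u l m : cv u l -> cv u m -> l = m.
Proof.
move=> hl hm; apply/eqP; rewrite -subr_eq0; apply/eqP; apply: nrm_eq0; apply/eqP; rewrite eq_le nrm_ge0 andbT.
apply/negP => /negP; rewrite -ltNge => hd.
have he : 0 < nrm (l - m) / 3 by rewrite divr_gt0.
have [N1 h1] := hl _ he; have [N2 h2] := hm _ he.
have := h1 (maxn N1 N2) (leq_maxl _ _); have := h2 (maxn N1 N2) (leq_maxr _ _).
set v := u _ => a b.
have : nrm (l - m) <= nrm (v - l) + nrm (v - m).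
  rewrite (nrmBC v l); have -> : l - m = (l - v) + (v - m) by rewrite addrA subrK.
  exact: nrmD.
lra.
Qed.

Lemma cv_const l : cv (fun _ => l) l.
Proof. by move=> e he; exists 0%N => n _; rewrite subrr nrm0. Qed.

Lemma cv_ext u v l : (forall n, u n = v n) -> cv u l -> cv v l.
Proof. move=> e h eps he; have [N hN] := h _ he; exists N => n hn; rewrite -e; exact: hN. Qed.

Lemma cv_D u v l m : cv u l -> cv v m -> cv (fun n => u n + v n) (l + m).
Proof.
move=> hu hv e he; have he2 : 0 < e / 2 by rewrite divr_gt0.
have [N1 h1] := hu _ he2; have [N2 h2] := hv _ he2.
exists (maxn N1 N2) => n hn.
have a := h1 n (leq_trans (leq_maxl _ _) hn); have b := h2 n (leq_trans (leq_maxr _ _) hn).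
have -> : u n + v n - (l + m) = (u n - l) + (v n - m) by rewrite opprD addrACA.
by apply: le_lt_trans (nrmD _ _) _; lra.
Qed.

Lemma cv_N u l : cv u l -> cv (fun n => - u n) (- l).
Proof. move=> h e he; have [N hN] := h _ he; exists N => n /hN; by rewrite -opprD nrmN. Qed.

Lemma cv_B u v l m : cv u l -> cv v m -> cv (fun n => u n - v n) (l - m).
Proof. by move=> hu hv; apply: cv_D => //; apply: cv_N. Qed.

Lemma cv_bnd (B : H -> H) (M : R) u l : (forall x y, B (x - y) = B x - B y) ->
  (forall x, nrm (B x) <= M * nrm x) -> cv u l -> cv (fun n => B (u n)) (B l).
Proof.
move=> hB hM h e he.
have hM1 : 0 < `|M| + 1 by rewrite ltr_pwDr.
have [N hN] := h _ (divr_gt0 he hM1); exists N => n /hN hn.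
rewrite ltr_pdivlMr // in hn; have h1 := hM (u n - l); rewrite hB in h1.
have := nrm_ge0 (u n - l); have := ler_norm M; nra.
Qed.

Lemma cv_Zc a u l : cv u l -> cv (fun n => a *: u n) (a *: l).
Proof.
apply: (cv_bnd (M := cabs a)) => [x y|x]; first by rewrite scalerBr.
by rewrite nrmZc.
Qed.

Lemma cv_sub u l (f : nat -> nat) : (forall k, (k <= f k)%N) -> cv u l -> cv (fun k => u (f k)) l.
Proof. move=> hf h e he; have [N hN] := h _ he; exists N => n hn; apply: hN; exact: leq_trans hn (hf n). Qed.

Lemma cv_le u l w (b : R) N : cv u l -> (forall n, (N <= n)%N -> nrm (u n - w) <= b) ->
  nrm (l - w) <= b.
Proof.
move=> h hb; case: (lerP (nrm (l - w)) b) => // hd; exfalso.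
have he : 0 < nrm (l - w) - b by rewrite subr_gt0.
have [N1 h1] := h _ he.
have a := h1 (maxn N N1) (leq_maxr _ _); have c := hb (maxn N N1) (leq_maxl _ _).
set v := u _ in a c.
have : nrm (l - w) <= nrm (v - l) + nrm (v - w).
  rewrite (nrmBC v l); have -> : l - w = (l - v) + (v - w) by rewrite addrA subrK.
  exact: nrmD.
lra.
Qed.

Lemma cv_ReIp u l x : cv u l -> rcv (fun n => Re (ip (u n) x)) (Re (ip l x)).
Proof.
move=> h e he; have hx : 0 < nrm x + 1 by rewrite ltr_pwDr ?nrm_ge0.
have [N hN] := h _ (divr_gt0 he hx); exists N => n /hN hn.
rewrite -ReB -ipBl; apply: le_lt_trans (CSabs _ _) _.
rewrite ltr_pdivlMr // in hn; have := nrm_ge0 x; have := nrm_ge0 (u n - l); nra.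
Qed.

Lemma cv_ImIp u l x : cv u l -> rcv (fun n => Im (ip (u n) x)) (Im (ip l x)).
Proof.
move=> h e he; have [N hN] := cv_ReIp ('i *: x) h he; exists N => n hn.
by rewrite !Im_ip; exact: hN.
Qed.

Lemma rcv_ge (a : nat -> R) l c : rcv a l -> (forall n, c <= a n) -> c <= l.
Proof.
move=> h hc; case: (lerP c l) => // hd; exfalso.
have he : 0 < c - l by rewrite subr_gt0.
have [N hN] := h _ he; have := hN N (leqnn N); have := hc N.
case: (lerP 0 (a N - l)) => s; [rewrite ger0_norm | rewrite ltr0_norm]; lra.
Qed.
Lemma rcv_le (a : nat -> R) l c : rcv a l -> (forall n, a n <= c) -> l <= c.
Proof.
move=> h hc; case: (lerP l c) => // hd; exfalso.
have he : 0 < l - c by rewrite subr_gt0.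
have [N hN] := h _ he; have := hN N (leqnn N); have := hc N.
case: (lerP 0 (a N - l)) => s; [rewrite ger0_norm | rewrite ltr0_norm]; lra.
Qed.
Lemma rcv_const (c : R) : rcv (fun _ => c) c.
Proof. by move=> e he; exists 0%N => n _; rewrite subrr normr0. Qed.
Lemma rcv_unique (a : nat -> R) l m : rcv a l -> rcv a m -> l = m.
Proof.
move=> hl hm; apply/eqP; rewrite eq_le; apply/andP; split.
  apply/negP => /negP; rewrite -ltNge => hd.
  have he : 0 < (l - m) / 2 by rewrite divr_gt0 // subr_gt0.
  have [N1 h1] := hl _ he; have [N2 h2] := hm _ he.
  have := h1 (maxn N1 N2) (leq_maxl _ _); have := h2 (maxn N1 N2) (leq_maxr _ _).
  set v := a _; case: (lerP 0 (v - l)) => s1; [rewrite (ger0_norm s1) | rewrite (ltr0_norm s1)];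
  case: (lerP 0 (v - m)) => s2; [rewrite (ger0_norm s2) | rewrite (ltr0_norm s2) | rewrite (ger0_norm s2) | rewrite (ltr0_norm s2)]; lra.
apply/negP => /negP; rewrite -ltNge => hd.
have he : 0 < (m - l) / 2 by rewrite divr_gt0 // subr_gt0.
have [N1 h1] := hl _ he; have [N2 h2] := hm _ he.
have := h1 (maxn N1 N2) (leq_maxl _ _); have := h2 (maxn N1 N2) (leq_maxr _ _).
set v := a _; case: (lerP 0 (v - l)) => s1; [rewrite (ger0_norm s1) | rewrite (ltr0_norm s1)];
case: (lerP 0 (v - m)) => s2; [rewrite (ger0_norm s2) | rewrite (ltr0_norm s2) | rewrite (ger0_norm s2) | rewrite (ltr0_norm s2)]; lra.
Qed.

Lemma cv_squeeze u l v m : (forall n, nrm (u n - l) <= nrm (v n - m)) -> cv v m -> cv u l.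
Proof. move=> hle h e he; have [N hN] := h _ he; exists N => n /hN; exact: le_lt_trans (hle n). Qed.
Lemma rcv_N (a : nat -> R) l : rcv a l -> rcv (fun n => - a n) (- l).
Proof. move=> h e he; have [N hN] := h _ he; exists N => n /hN; by rewrite -opprD normrN. Qed.
Lemma rcv_ext (a b : nat -> R) l : (forall n, a n = b n) -> rcv a l -> rcv b l.
Proof. move=> e h eps he; have [N hN] := h _ he; exists N => n hn; rewrite -e; exact: hN. Qed.
Lemma complex_ext (z w : R[i]) : Re z = Re w -> Im z = Im w -> z = w.
Proof. by case: z => a b; case: w => c d /= -> ->. Qed.
Lemma Im_ip_sym x y : Im (ip x y) = - Im (ip y x).
Proof. by rewrite (ip_sym y x) ImJ. Qed.

Definition lin (B : H -> H) := forall a x y, B (a *: x + y) = a *: B x + B y.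
Section Lin.
Variable B : H -> H.
Hypothesis hB : lin B.
Lemma lin0 : B 0 = 0.
Proof.
have e := hB 1 0 0; rewrite scaler0 addr0 scale1r in e.
by apply/(addrI (B 0)); rewrite addr0 -e.
Qed.
Lemma linD x y : B (x + y) = B x + B y.
Proof. by have := hB 1 x y; rewrite !scale1r. Qed.
Lemma linZ a x : B (a *: x) = a *: B x.
Proof. by have := hB a x 0; rewrite !addr0 lin0 addr0. Qed.
Lemma linN x : B (- x) = - B x.
Proof. by rewrite -(scaleN1r x) linZ scaleN1r. Qed.
Lemma linB x y : B (x - y) = B x - B y.
Proof. by rewrite linD linN. Qed.
End Lin.

Definition sa (B : H -> H) := forall x y, ip (B x) y = ip x (B y).

Lemma ge0_Im0 (w : R[i]) : 0 <= w -> Im w = 0.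
Proof. by move/ge0_real => [-> _]. Qed.

Lemma pos_sa B : lin B -> (forall x, 0 <= ip (B x) x) -> sa B.
Proof.
move=> hB hp x y.
have hq z : Im (ip (B z) z) = 0 by apply: ge0_Im0.
have E1 := hq (x + y); rewrite (linD hB) ipDl !ipDr in E1.
have E2 := hq (x + 'i *: y); rewrite (linD hB) (linZ hB) ipDl !ipDr !ipZl !ipZr in E2.
have E3 := hq x; have E4 := hq y.
rewrite (ip_sym (B y) x).
move: E1 E2 E3 E4; move: (ip (B x) x) (ip (B x) y) (ip (B y) x) (ip (B y) y).
move=> [p1 p2] [a1 a2] [b1 b2] [q1 q2] /= E1 E2 E3 E4.
congr (_ +i* _); lra.
Qed.

Definition qf (B : H -> H) x := Re (ip (B x) x).

Lemma pos_CS B c : lin B -> (forall x, 0 <= ip (B x) x) -> 0 <= c ->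
  (forall x, qf B x <= c * nq x) -> forall x, nq (B x) <= c * qf B x.
Proof.
move=> hB hp hc hf x.
have hs := pos_sa hB hp.
have flin : forall a u v z, ip (B (a *: u + v)) z = a * ip (B u) z + ip (B v) z.
  by move=> a u v z; rewrite hB ip_lin.
have fsym : forall u v, ip (B v) u = Num.conj (ip (B u) v).
  by move=> u v; rewrite hs ip_sym.
have := f_CS flin fsym hp x (B x).
rewrite -/(qf B x) -/(qf B (B x)) -/(normsq ip (B x)).
have h1 := hf (B x); have h2 : 0 <= qf B x by case: (ge0_real (hp x)).
have h3 := nq_ge0 (B x).
move=> h; case: (lerP (nq (B x)) 0) => h4; first by nra.
have : nq (B x) * nq (B x) <= nq (B x) * (c * qf B x) by nra.
by rewrite ler_pM2l.
Qed.

Lemma bounded_nrm B : bounded_op ip B -> exists K, 0 <= K /\ forall x, nrm (B x) <= K * nrm x.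
Proof.
case=> _ [M hM]; exists (Num.sqrt `|M|); split; first exact: sqrtr_ge0.
move=> x; rewrite /nrm -sqrtrM ?normr_ge0 // ler_sqrt; last by rewrite mulr_ge0 ?normr_ge0 ?nq_ge0.
by apply: le_trans (hM x) _; rewrite ler_wpM2r ?nq_ge0 ?ler_norm.
Qed.

Lemma nrm_bounded B K : lin B -> (forall x, nrm (B x) <= K * nrm x) -> bounded_op ip B.
Proof.
move=> hB hK; split => //; exists (K ^+ 2) => x.
have := hK x; have := nrm_ge0 (B x); have := nrm_ge0 x.
rewrite -(nrm_sq (B x)) -(nrm_sq x); nra.
Qed.

Lemma form_bound B K : (forall x, nrm (B x) <= K * nrm x) -> forall x, qf B x <= K * nq x.
Proof.
move=> hK x; apply: le_trans (CSn _ _) _.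
rewrite -nrm_sq; have := hK x; have := nrm_ge0 x; nra.
Qed.

Definition Aop (T : H -> H) (c : R) x := x - (c^-1 +i* 0) *: T x.
Fixpoint Yk (T : H -> H) (c : R) (k : nat) (x : H) : H :=
  match k with
  | 0 => 0
  | k'.+1 => (2^-1 +i* 0) *: (Aop T c x + Yk T c k' (Yk T c k' x))
  end.

Fixpoint ys (k : nat) : R := match k with 0 => 0 | k'.+1 => (1 + ys k' ^+ 2) / 2 end.
Lemma ys_bnd k : 0 <= ys k <= 1.
Proof. elim: k => [|k /andP [h1 h2]] /=; first by rewrite lexx ler01. apply/andP; split; nra. Qed.
Lemma ys_incr k : ys k <= ys k.+1.
Proof. have /andP [h1 h2] := ys_bnd k; rewrite /=; nra. Qed.
Lemma ys_mono k l : (k <= l)%N -> ys k <= ys l.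
Proof.
move/subnKC => <-; elim: (l - k)%N => [|n IH]; first by rewrite addn0.
by rewrite addnS; apply: le_trans IH (ys_incr _).
Qed.
Lemma ys_rate k : (1 - ys k) * (k%:R + 2) <= 2.
Proof.
elim: k => [|k IH] /=; first by rewrite subr0 mul1r add0r.
have /andP [h1 h2] := ys_bnd k.
have -> : (k.+1)%:R = (k%:R + 1 : R) by rewrite -natr1.
have hp : 0 <= (2 - (1 - ys k) * (k%:R + 2)) * (1 - (1 - ys k) / 2).
  by apply: mulr_ge0; lra.
have hsq : 0 <= (1 - ys k) ^+ 2 by apply: sqr_ge0.
nra.
Qed.

Lemma small_k (a e : R) : 0 <= a -> 0 < e ->
  exists N : nat, forall k, (N <= k)%N -> 2 / (k%:R + 2) * a < e.
Proof.
move=> ha he; set b := 2 * a / e.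
have hb : 0 <= b by rewrite /b divr_ge0 ?mulr_ge0 // ltW.
exists (Num.Def.archi_bound b) => k hk.
have h1 := archi_boundP hb.
have h2 : (Num.Def.archi_bound b)%:R <= k%:R :> R by rewrite ler_nat.
have hk2 : 0 < k%:R + 2 :> R by rewrite ltr_wpDl ?ler0n.
rewrite mulrC mulrA ltr_pdivrMr //.
have h3 : b < k%:R + 2 by lra.
have : 2 * a < (k%:R + 2) * e by rewrite -ltr_pdivrMr.
lra.
Qed.

Lemma lin_comp B C : lin B -> lin C -> lin (fun x => B (C x)).
Proof. by move=> hB hC a x y; rewrite hC hB. Qed.

Lemma vec_id (x y a : H) : x - y - (y - ((y + y) - a)) = x - a.
Proof. by rewrite opprB (addrAC (y + y)) addrK addrA subrK. Qed.
Lemma scaleRA (a b : R) (v : H) : (a +i* 0) *: ((b +i* 0) *: v) = ((a * b) +i* 0) *: v.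
Proof. rewrite scalerA; congr (_ *: _); apply: complex_ext; rewrite /=; ring. Qed.
Lemma scaleR1 (v : H) : (1 +i* 0) *: v = v.
Proof. exact: scale1r. Qed.
Lemma scaleRD (a b : R) (v : H) : ((a + b) +i* 0) *: v = (a +i* 0) *: v + (b +i* 0) *: v.
Proof. rewrite -scalerDl; congr (_ *: _); apply: complex_ext; rewrite /=; ring. Qed.

Definition Ylim (T : H -> H) (c : R) (x : H) : H :=
  epsilon (inhabits 0) (fun l => cv (fun k => Yk T c k x) l).
Definition Qop (T : H -> H) (c : R) (x : H) : H := (Num.sqrt c +i* 0) *: (x - Ylim T c x).

Section SqrtFix.
Variables (T : H -> H) (c : R).
Hypotheses (hT : lin T) (hTp : forall x, 0 <= ip (T x) x) (hc : 0 < c)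
  (hTf : forall x, qf T x <= c * nq x).

Let hTs := pos_sa hT hTp.
Let hTn := pos_CS hT hTp (ltW hc) hTf.

Lemma A_lin : lin (Aop T c).
Proof. move=> a x y; rewrite /Aop hT scalerDr scalerBr scalerA [_ * a]mulrC -scalerA; by rewrite opprD addrACA. Qed.

Lemma A_sa : sa (Aop T c).
Proof.
move=> x y; rewrite /Aop ipBl ipBr ipZl ipZr conjR hTs; by [].
Qed.

Lemma A_nrm x : nrm (Aop T c x) <= nrm x.
Proof.
rewrite /nrm ler_sqrt ?nq_ge0 // /Aop nqB nqZ ReZr Re_ip_sym -/(qf T x).
have h1 := hTn x; have h2 : 0 <= qf T x by case: (ge0_real (hTp x)).
have hs : c^-1 * c = 1 by rewrite mulVf // gt_eqF.
have hs0 : 0 < c^-1 by rewrite invr_gt0.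
have h3 : c^-1 ^+ 2 * nq (T x) <= c^-1 ^+ 2 * (c * qf T x) by rewrite ler_wpM2l // sqr_ge0.
have e : c^-1 ^+ 2 * (c * qf T x) = c^-1 * qf T x by rewrite expr2 -mulrA (mulrA c^-1 c) hs mul1r.
nra.
Qed.

Lemma A_comm B : lin B -> (forall x, B (T x) = T (B x)) -> forall x, B (Aop T c x) = Aop T c (B x).
Proof. by move=> hB hBT x; rewrite /Aop (linB hB) (linZ hB) hBT. Qed.

Lemma lin_half B C : lin B -> lin C -> lin (fun x => (2^-1 +i* 0) *: (B x + C x)).
Proof.
move=> hB hC a x y; rewrite hB hC scalerA mulrC -scalerA -scalerDr; congr (_ *: _).
by rewrite scalerDr addrACA.
Qed.

Lemma Y_lin k : lin (Yk T c k).
Proof.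
elim: k => [|k IH] /=; first by move=> a x y; rewrite scaler0 addr0.
by apply: lin_half; [exact: A_lin | exact: lin_comp].
Qed.

Lemma Y_sa k : sa (Yk T c k).
Proof.
elim: k => [|k IH] x y /=; first by rewrite ip0l ip0r.
by rewrite ipZl ipZr conjR ipDl ipDr A_sa IH IH.
Qed.

Lemma Y_bnd k x : nrm (Yk T c k x) <= ys k * nrm x.
Proof.
elim: k x => [|k IH] x /=; first by rewrite nrm0 mul0r.
rewrite nrmZ ger0_norm ?invr_ge0 ?ler0n //.
have h1 := nrmD (Aop T c x) (Yk T c k (Yk T c k x)).
have h2 := A_nrm x; have h3 := IH (Yk T c k x); have h4 := IH x.
have /andP [h5 h6] := ys_bnd k; have h7 := nrm_ge0 x.
have h8 : ys k * nrm (Yk T c k x) <= ys k * (ys k * nrm x) by rewrite ler_wpM2l.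
have hi : 0 < (2:R)^-1 by rewrite invr_gt0.
have -> : (1 + ys k ^+ 2) / 2 * nrm x = 2^-1 * ((1 + ys k ^+ 2) * nrm x) by ring.
rewrite ler_wpM2l //; nra.
Qed.

Lemma Y_comm B : lin B -> (forall x, B (T x) = T (B x)) ->
  forall k x, B (Yk T c k x) = Yk T c k (B x).
Proof.
move=> hB hBT; elim=> [|k IH] x /=; first exact: (lin0 hB).
by rewrite (linZ hB) (linD hB) (A_comm hB hBT) !IH.
Qed.

Lemma Y_diff k : forall l x, (k <= l)%N -> nrm (Yk T c l x - Yk T c k x) <= (ys l - ys k) * nrm x.
Proof.
elim: k => [|k IH] l x hkl.
  by rewrite [Yk T c 0 x]/= [ys 0]/= !subr0; apply: Y_bnd.
case: l hkl => [//|l] hkl; rewrite ltnS in hkl.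
have e : Yk T c l.+1 x - Yk T c k.+1 x = (2^-1 +i* 0) *:
  (Yk T c l (Yk T c l x - Yk T c k x) + (Yk T c l (Yk T c k x) - Yk T c k (Yk T c k x))).
  rewrite /= -scalerBr; congr (_ *: _).
  by rewrite (linB (Y_lin l)) opprD addrACA subrr add0r addrA subrK.
rewrite e nrmZ ger0_norm ?invr_ge0 ?ler0n //.
have h1 := nrmD (Yk T c l (Yk T c l x - Yk T c k x)) (Yk T c l (Yk T c k x) - Yk T c k (Yk T c k x)).
have h2 := Y_bnd l (Yk T c l x - Yk T c k x).
have h3 := IH l (Yk T c k x) hkl.
have h4 := IH l x hkl.
have h5 := Y_bnd k x.
have /andP [a1 a2] := ys_bnd k; have /andP [b1 b2] := ys_bnd l.
have hm := ys_mono hkl.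
have h6 : ys l * nrm (Yk T c l x - Yk T c k x) <= ys l * ((ys l - ys k) * nrm x) by rewrite ler_wpM2l.
have h7 : (ys l - ys k) * nrm (Yk T c k x) <= (ys l - ys k) * (ys k * nrm x) by rewrite ler_wpM2l // subr_ge0.
have hi : 0 < (2:R)^-1 by rewrite invr_gt0.
have -> : (ys l.+1 - ys k.+1) * nrm x = 2^-1 * ((ys l ^+ 2 - ys k ^+ 2) * nrm x) by rewrite /=; ring.
rewrite ler_wpM2l //; nra.
Qed.

Lemma Y_cauchy x k l : (k <= l)%N -> nrm (Yk T c l x - Yk T c k x) <= 2 / (k%:R + 2) * nrm x.
Proof.
move=> hkl; apply: le_trans (Y_diff x hkl) _; rewrite ler_wpM2r ?nrm_ge0 //.
have := ys_rate k; have /andP [_ h] := ys_bnd l.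
have hk : 0 < k%:R + 2 :> R by rewrite ltr_wpDl ?ler0n.
rewrite ler_pdivlMr //; nra.
Qed.

Lemma Y_cauchy_seq x : cauchy_seq ip (fun k => Yk T c k x).
Proof.
move=> e he; have hs : 0 < Num.sqrt e by rewrite sqrtr_gt0.
have [N hN] := small_k (nrm_ge0 x) hs.
exists N => n m hn hm; rewrite -nrm_sq.
have : nrm (Yk T c n x - Yk T c m x) < Num.sqrt e.
  case: (leqP m n) => h.
    exact: le_lt_trans (Y_cauchy x h) (hN _ hm).
  rewrite nrmBC; exact: le_lt_trans (Y_cauchy x (ltnW h)) (hN _ hn).
have := sqr_sqrtr (ltW he); have := nrm_ge0 (Yk T c n x - Yk T c m x); have := sqrtr_ge0 e.
nra.
Qed.

Lemma Ylim_cv x : cv (fun k => Yk T c k x) (Ylim T c x).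
Proof.
rewrite /Ylim; apply: epsilon_spec.
have [l hl] := ip_complete (Y_cauchy_seq x); exists l; exact: cvg_to_cv.
Qed.

Lemma Ylim_unif x k : nrm (Ylim T c x - Yk T c k x) <= 2 / (k%:R + 2) * nrm x.
Proof. apply: (cv_le (N := k) (Ylim_cv x)) => n hn; exact: Y_cauchy. Qed.

Lemma Ylim_lin : lin (Ylim T c).
Proof.
move=> a x y; apply: (cv_unique (Ylim_cv (a *: x + y))).
apply: (cv_ext (u := fun k => a *: Yk T c k x + Yk T c k y)).
  by move=> k; rewrite Y_lin.
by apply: cv_D; [apply: cv_Zc; apply: Ylim_cv | apply: Ylim_cv].
Qed.

Lemma Ylim_bnd x : nrm (Ylim T c x) <= nrm x.
Proof.
rewrite -[Ylim T c x]subr0; apply: (cv_le (N := 0) (Ylim_cv x)) => n _.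
rewrite subr0; apply: le_trans (Y_bnd n x) _.
have /andP [_ h] := ys_bnd n; rewrite -[X in _ <= X]mul1r ler_wpM2r ?nrm_ge0 //.
Qed.

Lemma Ylim_sa : sa (Ylim T c).
Proof.
move=> x y; apply: complex_ext.
  apply: (rcv_unique (cv_ReIp y (Ylim_cv x))).
  apply: (rcv_ext (a := fun n => Re (ip (Yk T c n y) x))).
    by move=> n; rewrite Re_ip_sym Y_sa.
  by rewrite -Re_ip_sym; apply: cv_ReIp; apply: Ylim_cv.
apply: (rcv_unique (cv_ImIp y (Ylim_cv x))).
apply: (rcv_ext (a := fun n => - Im (ip (Yk T c n y) x))).
  by move=> n; rewrite -Im_ip_sym Y_sa.
rewrite (Im_ip_sym x); apply: rcv_N; apply: cv_ImIp; apply: Ylim_cv.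
Qed.

Lemma Ylim_comm B K : lin B -> (forall x, nrm (B x) <= K * nrm x) ->
  (forall x, B (T x) = T (B x)) -> forall x, B (Ylim T c x) = Ylim T c (B x).
Proof.
move=> hB hK hBT x; apply: (cv_unique (cv_bnd (linB hB) hK (Ylim_cv x))).
apply: (cv_ext (u := fun k => Yk T c k (B x))); first by move=> k; rewrite (Y_comm hB hBT).
exact: Ylim_cv.
Qed.

Lemma Ylim_fix x : Ylim T c x = (2^-1 +i* 0) *: (Aop T c x + Ylim T c (Ylim T c x)).
Proof.
have h1 : cv (fun k => Yk T c k.+1 x) (Ylim T c x).
  exact: (cv_sub (u := fun k => Yk T c k x) (f := S) (fun k => leqnSn k) (Ylim_cv x)).
apply: (cv_unique h1) => /=.
apply: cv_Zc; apply: cv_D; first exact: cv_const.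
have h2 : cv (fun k => Yk T c k (Yk T c k x - Ylim T c x) + (Yk T c k (Ylim T c x))) (0 + Ylim T c (Ylim T c x)).
  apply: cv_D; last exact: Ylim_cv.
  apply: (cv_squeeze (v := fun k => Yk T c k x) (m := Ylim T c x)); last exact: Ylim_cv.
  move=> n; rewrite subr0; apply: le_trans (Y_bnd _ _) _.
  have /andP [_ h] := ys_bnd n; rewrite -[X in _ <= X]mul1r ler_wpM2r ?nrm_ge0 //.
rewrite add0r in h2; apply: (cv_ext _ h2) => k.
by rewrite (linB (Y_lin k)) subrK.
Qed.

Lemma Q_lin : lin (Qop T c).
Proof.
move=> a x y; rewrite /Qop Ylim_lin opprD addrACA -scalerBr scalerDr !scalerA.
by rewrite [_ * a]mulrC.
Qed.

Lemma Q_bnd x : nrm (Qop T c x) <= (2 * Num.sqrt c) * nrm x.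
Proof.
rewrite /Qop nrmZ ger0_norm ?sqrtr_ge0 //.
have h1 := nrmB x (Ylim T c x); have h2 := Ylim_bnd x; have h3 := sqrtr_ge0 c.
have : Num.sqrt c * nrm (x - Ylim T c x) <= Num.sqrt c * (2 * nrm x) by rewrite ler_wpM2l //; lra.
lra.
Qed.

Lemma Q_sa : sa (Qop T c).
Proof. by move=> x y; rewrite /Qop ipZl ipZr conjR ipBl ipBr Ylim_sa. Qed.

Lemma Ylim_real x : ip (Ylim T c x) x = (Re (ip (Ylim T c x) x) +i* 0).
Proof.
apply: real_Re; apply: conj_real_eq.
by rewrite -ip_sym Ylim_sa.
Qed.

Lemma Q_pos x : 0 <= ip (Qop T c x) x.
Proof.
rewrite /Qop ipZl ipBl ip_nq Ylim_real.
have h1 := CSn (Ylim T c x) x; have h2 := Ylim_bnd x.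
have h3 := nrm_ge0 x; have h4 := nrm_ge0 (Ylim T c x); have h5 := sqrtr_ge0 c.
have h6 : Re (ip (Ylim T c x) x) <= nq x.
  rewrite -nrm_sq expr2; apply: le_trans h1 _; by rewrite ler_wpM2r.
move: h6; set r := Re _ => h6.
rewrite lecE /=; apply/andP; split; first by apply/eqP; ring.
nra.
Qed.

Lemma Q_sq x : Qop T c (Qop T c x) = T x.
Proof.
have hf : Ylim T c (Ylim T c x) = (Ylim T c x + Ylim T c x) - Aop T c x.
  have := congr1 (fun v => (2 +i* 0) *: v) (Ylim_fix x); rewrite /= scaleRA.
  rewrite mulfV ?pnatr_eq0 // scaleR1.
  have -> : (2 : R) = 1 + 1 by [].
  by rewrite scaleRD scaleR1 => ->; rewrite addrC addKr.
rewrite /Qop (linZ Ylim_lin) -scalerBr scaleRA (linB Ylim_lin) hf vec_id.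
rewrite /Aop opprB addrC subrK scaleRA.
rewrite -[X in _ = X]scaleR1; congr (_ *: _); congr (_ +i* _).
by rewrite -expr2 sqr_sqrtr ?ltW // mulfV // gt_eqF.
Qed.

Lemma Q_comm B K : lin B -> (forall x, nrm (B x) <= K * nrm x) ->
  (forall x, B (T x) = T (B x)) -> forall x, B (Qop T c x) = Qop T c (B x).
Proof.
move=> hB hK hBT x; rewrite /Qop (linZ hB) (linB hB).
by rewrite (Ylim_comm hB hK hBT).
Qed.

Lemma pos_Re_sum0 (z w : R[i]) : 0 <= z -> 0 <= w -> z + w = 0 -> Re z = 0 /\ Re w = 0.
Proof.
case: z => a b; case: w => a' b'; rewrite !lecE /= => /andP [_ h1] /andP [_ h2] [e _].
split; lra.
Qed.

Lemma sqrt_unique S K : lin S -> (forall x, 0 <= ip (S x) x) -> 0 <= K ->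
  (forall x, nrm (S x) <= K * nrm x) -> (forall x, S (S x) = T x) ->
  forall x, S x = Qop T c x.
Proof.
move=> hS hSp hK0 hK hSS v.
have hST : forall x, S (T x) = T (S x) by move=> x; rewrite -!hSS.
have hSQ := Q_comm hS hK hST.
have hSs := pos_sa hS hSp.
set w := S v - Qop T c v.
have hsum : ip (S w) w + ip (Qop T c w) w = 0.
  rewrite -ipDl /w (linB hS) (linB Q_lin) hSS Q_sq hSQ.
  by rewrite addrA subrK subrr ip0l.
have [h1 h2] := pos_Re_sum0 (hSp w) (Q_pos w) hsum.
have hSw : S w = 0.
  apply: nq_eq0; apply/eqP; rewrite eq_le nq_ge0 andbT.
  apply: le_trans (pos_CS hS hSp hK0 (form_bound hK) w) _.
  by rewrite /qf h1 mulr0.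
have hQw : Qop T c w = 0.
  have hc2 : 0 <= 2 * Num.sqrt c by rewrite mulr_ge0 ?sqrtr_ge0.
  apply: nq_eq0; apply/eqP; rewrite eq_le nq_ge0 andbT.
  apply: le_trans (pos_CS Q_lin Q_pos hc2 (form_bound Q_bnd) w) _.
  by rewrite /qf h2 mulr0.
have hw : w = 0.
  apply: nq_eq0; rewrite /normsq {2}/w ipBl.
  by rewrite hSs Q_sa hSw hQw ip0r subrr.
by apply/eqP; rewrite -subr_eq0; apply/eqP.
Qed.

End SqrtFix.

Section Cont.
Variables (Tn : nat -> H -> H) (T : H -> H) (c : R).
Hypotheses (hTn : forall n, lin (Tn n)) (hTnp : forall n x, 0 <= ip (Tn n x) x)
  (hTnf : forall n x, qf (Tn n) x <= c * nq x)
  (hT : lin T) (hTp : forall x, 0 <= ip (T x) x) (hTf : forall x, qf T x <= c * nq x)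
  (hc : 0 < c) (hcv : forall x, cv (fun n => Tn n x) (T x)).

Lemma nrm3 (a b d : H) : nrm (a - d) <= nrm (a - b) + nrm (b - d).
Proof. have -> : a - d = (a - b) + (b - d) by rewrite addrA subrK. exact: nrmD. Qed.

Lemma Yk_cont k : forall x, cv (fun n => Yk (Tn n) c k x) (Yk T c k x).
Proof.
elim: k => [|k IH] x /=; first exact: cv_const.
apply: cv_Zc; apply: cv_D.
  rewrite /Aop; apply: cv_B; first exact: cv_const.
  by apply: cv_Zc.
have h2 : cv (fun n => Yk (Tn n) c k (Yk (Tn n) c k x - Yk T c k x) + Yk (Tn n) c k (Yk T c k x))
  (0 + Yk T c k (Yk T c k x)).
  apply: cv_D; last exact: IH.
  apply: (cv_squeeze (v := fun n => Yk (Tn n) c k x) (m := Yk T c k x)); last exact: IH.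
  move=> n; rewrite subr0; apply: le_trans (@Y_bnd (Tn n) c (hTn n) (hTnp n) hc (hTnf n) _ _) _.
  have /andP [_ h] := ys_bnd k; rewrite -[X in _ <= X]mul1r ler_wpM2r ?nrm_ge0 //.
rewrite add0r in h2; apply: (cv_ext _ h2) => n.
by rewrite (linB (@Y_lin (Tn n) c (hTn n) k)) subrK.
Qed.

Lemma Ylim_cont x : cv (fun n => Ylim (Tn n) c x) (Ylim T c x).
Proof.
move=> e he; have he3 : 0 < e / 3 by rewrite divr_gt0.
have [K hK] := small_k (nrm_ge0 x) he3.
have [N hN] := Yk_cont K x he3.
exists N => n hn.
have a1 := @Ylim_unif (Tn n) c (hTn n) (hTnp n) hc (hTnf n) x K.
have a2 := hN n hn.
have a3 := @Ylim_unif T c hT hTp hc hTf x K.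
have a4 := hK K (leqnn K).
have := nrm3 (Ylim (Tn n) c x) (Yk (Tn n) c K x) (Ylim T c x).
have := nrm3 (Yk (Tn n) c K x) (Yk T c K x) (Ylim T c x).
rewrite (nrmBC (Yk T c K x)); lra.
Qed.

Lemma Q_cont x : cv (fun n => Qop (Tn n) c x) (Qop T c x).
Proof. apply: cv_Zc; apply: cv_B; [exact: cv_const | exact: Ylim_cont]. Qed.
End Cont.

Lemma Q_positive T c : lin T -> (forall x, 0 <= ip (T x) x) -> 0 < c ->
  (forall x, qf T x <= c * nq x) -> positive_op ip (Qop T c).
Proof.
move=> hT hTp hc hTf; split; last exact: Q_pos.
exact: (nrm_bounded (Q_lin hT hTp hc hTf) (Q_bnd hT hTp hc hTf)).
Qed.

Lemma op_sqrt_spec T c : lin T -> (forall x, 0 <= ip (T x) x) -> 0 < c ->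
  (forall x, qf T x <= c * nq x) ->
  positive_op ip (op_sqrt ip T) /\ forall x, op_sqrt ip T (op_sqrt ip T x) = T x.
Proof.
move=> hT hTp hc hTf.
have h : exists S, positive_op ip S /\ forall x, S (S x) = T x.
  exists (Qop T c); split; first exact: Q_positive.
  exact: Q_sq.
exact: (epsilon_spec (inhabits (fun x : H => x)) _ h).
Qed.

Lemma op_sqrt_eq T c : lin T -> (forall x, 0 <= ip (T x) x) -> 0 < c ->
  (forall x, qf T x <= c * nq x) -> forall x, op_sqrt ip T x = Qop T c x.
Proof.
move=> hT hTp hc hTf.
have [[hS hSp] hSS] := op_sqrt_spec hT hTp hc hTf.
have [K [hK0 hK]] := bounded_nrm hS.
exact: (sqrt_unique hT hTp hc hTf hS.1 hSp hK0 hK hSS).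
Qed.

Lemma pos_bound T : positive_op ip T -> exists c, 0 < c /\ forall x, qf T x <= c * nq x.
Proof.
move=> [hT hTp]; have [K [hK0 hK]] := bounded_nrm hT.
exists (K + 1); split; first by rewrite ltr_wpDl.
move=> x; apply: le_trans (form_bound hK x) _.
by rewrite ler_wpM2r ?nq_ge0 // lerDl.
Qed.

Lemma sa_proj P : orth_proj ip P -> sa P.
Proof. by case. Qed.
Lemma lin_proj P : orth_proj ip P -> lin P.
Proof. by case=> [[]]. Qed.

Lemma proj_orth P : orth_proj ip P -> forall y, ip (y - P y) (P y) = 0.
Proof.
move=> hP y; have [_ hPP hPs] := hP.
by rewrite -hPs (linB (lin_proj hP)) hPP subrr ip0l.
Qed.

Lemma Phi_fix P T : orth_proj ip P -> positive_op ip T -> (forall x, P (T x) = 0) ->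
  forall x, Phi ip P T x = T x.
Proof.
move=> hP hT hPT.
have [c [hc hf]] := pos_bound hT.
have [[hS hSp] hSS] := op_sqrt_spec hT.1.1 hT.2 hc hf.
set S := op_sqrt ip T in hS hSp hSS *.
have hTs := pos_sa hT.1.1 hT.2; have hSs := pos_sa hS.1 hSp.
have [_ hPP hPs] := hP.
have hTP : forall x, T (P x) = 0.
  move=> x; apply: nq_eq0; by rewrite /normsq hTs hPs hPT ip0r.
have hSP : forall x, S (P x) = 0.
  move=> x; apply: nq_eq0; by rewrite /normsq hSs hSS hTP ip0r.
have hPS : forall y, P (S y) = 0.
  move=> y; apply: nq_eq0; by rewrite /normsq hPs hPP hSs hSP ip0r.
by move=> x; rewrite /Phi -/S hPS subr0 hSS.
Qed.

Lemma Phi_props P B c : orth_proj ip P -> lin B -> (forall x, 0 <= ip (B x) x) -> 0 < c ->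
  (forall x, qf B x <= c * nq x) ->
  [/\ lin (Phi ip P B), (forall x, 0 <= ip (Phi ip P B x) x) & (forall x, qf (Phi ip P B) x <= qf B x)].
Proof.
move=> hP hB hBp hc hBf.
have [[hS hSp] hSS] := op_sqrt_spec hB hBp hc hBf.
set S := op_sqrt ip B in hS hSp hSS *.
have hSs := pos_sa hS.1 hSp.
have hPl := lin_proj hP.
have key : forall x, ip (Phi ip P B x) x = ip (S x - P (S x)) (S x - P (S x)).
  move=> x; rewrite /Phi -/S hSs; set y := S x.
  by rewrite [in RHS]ipBr proj_orth // subr0.
split.
- have hIP : lin (fun y => y - P y).
    by move=> a x y; rewrite hPl opprD addrACA scalerBr.
  exact: (lin_comp hS.1 (lin_comp hIP hS.1)).
- by move=> x; rewrite key ip_pos.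
- move=> x; rewrite /qf key -/(normsq ip _).
  have e : normsq ip (S x) = normsq ip (S x - P (S x)) + normsq ip (P (S x)).
    have e0 : S x = (S x - P (S x)) + P (S x) by rewrite subrK.
    rewrite {1}e0 nqD proj_orth // Re0; lra.
  have : normsq ip (S x) = Re (ip (B x) x) by rewrite /normsq hSs hSS Re_ip_sym.
  have := nq_ge0 (P (S x)); lra.
Qed.

Section Fwd.
Variables (PA PB R0 T : H -> H).
Hypotheses (hPA : orth_proj ip PA) (hPB : orth_proj ip PB) (hR0 : positive_op ip R0)
  (hlim : strong_limit ip (residual ip PA PB R0) T).

Variable c : R.
Hypotheses (hc : 0 < c) (hR0f : forall x, qf R0 x <= c * nq x).
Let Rn := residual ip PA PB R0.

Lemma Rn_props n : [/\ lin (Rn n), (forall x, 0 <= ip (Rn n x) x) & forall x, qf (Rn n) x <= c * nq x].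
Proof.
elim: n => [|n [h1 h2 h3]]; first by split; [exact: hR0.1.1 | exact: hR0.2 | exact: hR0f].
have hP : orth_proj ip (if odd n then PA else PB) by case: (odd n).
have [k1 k2 k3] := Phi_props hP h1 h2 hc h3.
rewrite /Rn /=; split => // x; exact: le_trans (k3 x) (h3 x).
Qed.
Lemma Rn_lin n : lin (Rn n). Proof. by case: (Rn_props n). Qed.
Lemma Rn_pos n x : 0 <= ip (Rn n x) x. Proof. by case: (Rn_props n). Qed.
Lemma Rn_f n x : qf (Rn n) x <= c * nq x. Proof. by case: (Rn_props n). Qed.

Lemma hcv x : cv (fun n => Rn n x) (T x).
Proof. exact: cvg_to_cv (hlim x). Qed.

Lemma T_lin : lin T.
Proof.
move=> a x y; apply: (cv_unique (hcv (a *: x + y))).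
apply: (cv_ext (u := fun n => a *: Rn n x + Rn n y)); first by move=> n; rewrite Rn_lin.
by apply: cv_D; [apply: cv_Zc; apply: hcv | apply: hcv].
Qed.

Lemma T_pos x : 0 <= ip (T x) x.
Proof.
have hRe : 0 <= Re (ip (T x) x).
  apply: (rcv_ge (cv_ReIp x (hcv x))) => n; by case: (ge0_real (Rn_pos n x)).
have hIm1 : 0 <= Im (ip (T x) x).
  apply: (rcv_ge (cv_ImIp x (hcv x))) => n; by rewrite (ge0_Im0 (Rn_pos n x)).
have hIm2 : Im (ip (T x) x) <= 0.
  apply: (rcv_le (cv_ImIp x (hcv x))) => n; by rewrite (ge0_Im0 (Rn_pos n x)).
move: hRe hIm1 hIm2; case: (ip (T x) x) => a b /= h1 h2 h3.
rewrite lecE /= h1 andbT; apply/eqP; lra.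
Qed.

Lemma T_f x : qf T x <= c * nq x.
Proof. apply: (rcv_le (cv_ReIp x (hcv x))) => n; exact: Rn_f. Qed.

Lemma T_positive : positive_op ip T.
Proof.
split; last exact: T_pos.
split; first exact: T_lin.
exists (c * c) => x.
have h1 := pos_CS T_lin T_pos (ltW hc) T_f x; have h2 := T_f x.
have h3 : c * qf T x <= c * (c * nq x) by rewrite ler_pM2l.
rewrite mulrA in h3; exact: le_trans h1 h3.
Qed.

Lemma T_range P (f : nat -> nat) : orth_proj ip P -> (forall k, (k <= f k)%N) ->
  (forall k, Rn (f k).+1 = Phi ip P (Rn (f k))) -> forall x, P (T x) = 0.
Proof.
move=> hP hf hRf.
have [hPb hPP hPs] := hP; have hPl := lin_proj hP.
have [KP [hKP0 hKP]] := bounded_nrm hPb.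
have hTl := T_lin; have hTp := T_pos; have hTf := T_f.
set Sq := Qop T c.
have hSn : forall n x, op_sqrt ip (Rn n) x = Qop (Rn n) c x.
  move=> n x; exact: (op_sqrt_eq (Rn_lin n) (Rn_pos n) hc (Rn_f n)).
have hcS : forall x, cv (fun n => Qop (Rn n) c x) (Sq x).
  move=> x; exact: (Q_cont Rn_lin Rn_pos Rn_f hTl hTp hTf hc hcv).
have hcSf : forall x, cv (fun k => Qop (Rn (f k)) c x) (Sq x).
  by move=> x; apply: (cv_sub (u := fun n => Qop (Rn n) c x)).
have hQb : forall n x, nrm (Qop (Rn n) c x) <= (2 * Num.sqrt c) * nrm x.
  move=> n; exact: (Q_bnd (Rn_lin n) (Rn_pos n) hc (Rn_f n)).
have hSQ : forall x, Sq (P (Sq x)) = 0.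
  move=> x; set z := Sq x - P (Sq x).
  have hz : cv (fun k => Qop (Rn (f k)) c x - P (Qop (Rn (f k)) c x)) z.
    apply: cv_B; first exact: hcSf.
    exact: (cv_bnd (linB hPl) hKP (hcSf x)).
  have h1 : cv (fun k => Rn (f k).+1 x) (Sq z).
    apply: (cv_ext (u := fun k => Qop (Rn (f k)) c (Qop (Rn (f k)) c x - P (Qop (Rn (f k)) c x) - z) + Qop (Rn (f k)) c z)).
      move=> k; rewrite hRf /Phi !hSn.
      by rewrite (linB (Q_lin (Rn_lin _) (Rn_pos _) hc (Rn_f _))) subrK.
    rewrite -[Sq z]add0r; apply: cv_D; last exact: hcSf.
    have hv := cv_Zc ((2 * Num.sqrt c) +i* 0) (cv_B hz (cv_const z)).
    rewrite subrr scaler0 in hv.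
    apply: (cv_squeeze _ hv) => k; rewrite !subr0; apply: le_trans (hQb _ _) _.
    by rewrite nrmZ ger0_norm ?mulr_ge0 ?sqrtr_ge0.
  have h2 : cv (fun k => Rn (f k).+1 x) (T x).
    by apply: (cv_sub (u := fun n => Rn n x)) => [k|]; [apply: leqW | exact: hcv].
  have e := cv_unique h1 h2.
  rewrite /z /Sq (linB (Q_lin hTl hTp hc hTf)) (Q_sq hTl hTp hc hTf) -[RHS]addr0 in e.
  by move/addrI/eqP: e; rewrite oppr_eq0 => /eqP.
move=> x; rewrite -(Q_sq hTl hTp hc hTf x); rewrite /Sq in hSQ.
apply: nq_eq0; rewrite /normsq hPs hPP (Q_sa hTl hTp hc hTf) hSQ ip0r; by [].
Qed.


Lemma fwd_result : positive_op ip T /\ forall x, PA (T x) = 0 /\ PB (T x) = 0.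
Proof.
split; first exact: T_positive.
move=> x; split.
  apply: (T_range (f := fun k => k.*2.+1) hPA) => [k|k].
    by rewrite -addnn leqW // leq_addr.
  by rewrite /Rn /= odd_double.
apply: (T_range (f := fun k => k.*2) hPB) => [k|k].
  by rewrite -addnn leq_addr.
by rewrite /Rn /= odd_double.
Qed.
End Fwd.

Lemma bwd_result PA PB T : orth_proj ip PA -> orth_proj ip PB -> positive_op ip T ->
  (forall x, PA (T x) = 0 /\ PB (T x) = 0) -> strong_limit ip (residual ip PA PB T) T.
Proof.
move=> hPA hPB hT hK.
have e : forall n, residual ip PA PB T n = T.
  elim=> [//|n IH] /=; rewrite IH; apply: functional_extensionality => x.
  case: (odd n); apply: Phi_fix => // y; by case: (hK y).
move=> x; rewrite (_ : (fun n => residual ip PA PB T n x) = fun _ => T x).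
  exact: cv_cvg_to (cv_const _).
by apply: functional_extensionality => n; rewrite e.
Qed.

End Hilb.

Unset Implicit Arguments.

Theorem corollary2p2 (R : realType) (H : lmodType R[i]) (ip : H -> H -> R[i])
  (hH : is_hilbert ip) (PA PB : H -> H)
  (hPA : orth_proj ip PA) (hPB : orth_proj ip PB) :
  forall T : H -> H,
    (exists R0 : H -> H, positive_op ip R0 /\
        strong_limit ip (residual ip PA PB R0) T)
    <->
    (positive_op ip T /\ forall x, PA (T x) = 0 /\ PB (T x) = 0).
Proof.
move=> T; split.
  move=> [R0 [hR0 hlim]].
  have [c [hc hf]] := pos_bound hH hR0.
  exact: (fwd_result hH hPA hPB hR0 hlim hc hf).
move=> [hT hK]; exists T; split => //.
exact: bwd_result.
Qed.
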